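(* If $x\in\mathrm{Sort}_n(123,321)$, then $x$ avoids the pattern $123$.
   Context: A permutation contains a pattern $p$ if it has a subsequence order-isomorphic to $p$; otherwise it avoids $p$. For a set $T$ of patterns, the map $s_T$ is defined as follows: the entries of the input permutation are read from left to right, with an initially empty stack. At each step, if the input is nonempty and pushing the next input entry onto the stack produces a stack whose contents, read from top to bottom, avoid every pattern in $T$, that entry is pushed; otherwise the top entry of the stack is popped and appended to the output. When the input is exhausted, the remaining stack entries are popped one at a time to the output. Write $s_{\sigma,\tau}=s_{\{\sigma,\tau\}}$ and $s=s_{\{21\}}$ (West's stack-sorting map). $\mathrm{Sort}_n(\sigma,\tau)$ is the set of $x\in S_n$ with $s(s_{\sigma,\tau}(x))=12\cdots n$. *)

(* Defs.v *)
(* Permutations are sequences of naturals; x in S_n means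
   perm_eq x (iota 1 n). Patterns are sequences of distinct naturals. *)
From mathcomp Require Import all_boot.
Set Implicit Arguments. Unset Strict Implicit. Unset Printing Implicit Defensive.

Definition order_iso (s p : seq nat) : bool :=
  (size s == size p) &&
  all (fun i => all (fun j => (nth 0 s i < nth 0 s j) == (nth 0 p i < nth 0 p j))
                    (iota 0 (size p))) (iota 0 (size p)).

Fixpoint subseqs (x : seq nat) : seq (seq nat) :=
  match x with
  | [::] => [:: [::]]
  | a :: x' => let r := subseqs x' in [seq a :: s | s <- r] ++ r
  end.

Definition contains (x p : seq nat) : bool :=
  has (fun s => order_iso s p) (subseqs x).

Definition avoids (x p : seq nat) : bool := ~~ contains x p.

Definition avoids_all (T : seq (seq nat)) (x : seq nat) : bool :=
  all (avoids x) T.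

(* One run of the stack map s_T.  [st] is the stack read from top to bottom
   (head = top).  [out] is the output so far.  Each entry is pushed once and
   popped once, so fuel 2*|input|+1 suffices.  (If the push is forbidden
   while the stack is empty -- impossible for patterns of length >= 2 -- the
   entry is pushed anyway; this case never arises for the sets used here.) *)
Fixpoint stack_run (T : seq (seq nat)) (fuel : nat) (inp st out : seq nat)
  : seq nat :=
  match fuel with
  | 0 => out ++ st
  | f.+1 =>
    match inp with
    | [::] => out ++ st
    | a :: inp' =>
      if avoids_all T (a :: st) then stack_run T f inp' (a :: st) out
      else match st with
           | [::] => stack_run T f inp' [:: a] out
           | b :: st' => stack_run T f inp st' (rcons out b)
           end
    end
  end.

Definition stack_map (T : seq (seq nat)) (x : seq nat) : seq nat :=
  stack_run T (size x).*2.+1 x [::] [::].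

Definition s2 (sigma tau : seq nat) := stack_map [:: sigma; tau].

Definition west (x : seq nat) := stack_map [:: [:: 2; 1]] x.

Definition Sort (n : nat) (sigma tau : seq nat) (x : seq nat) : Prop :=
  perm_eq x (iota 1 n) /\ west (s2 sigma tau x) = iota 1 n.

Example west_ex : west [:: 2; 3; 1] = [:: 2; 1; 3]. Proof. vm_compute. reflexivity. Qed.
Example west_ex2 : west [:: 3; 1; 2] = [:: 1; 2; 3]. Proof. vm_compute. reflexivity. Qed.
Example s2_ex : s2 [:: 1;2;3] [:: 3;2;1] [:: 1;2;3] = [:: 2;3;1]. Proof. vm_compute. reflexivity. Qed.
Example avoid_ex : avoids [:: 2; 3; 1] [:: 1;2;3]. Proof. vm_compute. reflexivity. Qed.
Example contains_ex : contains [:: 1; 3; 2] [:: 2; 1]. Proof. vm_compute. reflexivity. Qed.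

(* Main.v *)
Require Import Defs.
From mathcomp Require Import all_boot zify.
Set Implicit Arguments. Unset Strict Implicit. Unset Printing Implicit Defensive.

Lemma subseqs_mem s x : (s \in subseqs x) = subseq s x.
Proof.
elim: x s => [|a x IH] s /=.
  by case: s => [|b s] //=; rewrite inE.
rewrite mem_cat; case: s => [|b s] /=.
  by rewrite IH sub0seq orbT.
rewrite IH; case: eqP => [->|ne].
  rewrite mem_map; last by move=> ? ? [].
  rewrite IH; apply/orP/idP => [[//|]|->]; last by left.
  by move/(subseq_trans)/(_ (subseq_cons x a)) => /=; rewrite eqxx.
apply/orP/idP => [[/mapP [t _ [E _]]|]|->]; by [|case: ne|right].
Qed.
Definition inc3 s := exists u v w, subseq [:: u; v; w] s /\ u < v /\ v < w.
Definition dec3 s := exists u v w, subseq [:: u; v; w] s /\ w < v /\ v < u.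
Definition okst s := ~ inc3 s /\ ~ dec3 s.
Definition T2 := [:: [:: 1; 2; 3]; [:: 3; 2; 1]].

Lemma oi123 u v w : order_iso [:: u; v; w] [:: 1; 2; 3] = (u < v) && (v < w).
Proof.
rewrite /order_iso /= !ltnn /=.
change (1 < 2) with true; change (1 < 3) with true; change (2 < 3) with true.
change (2 < 1) with false; change (3 < 1) with false; change (3 < 2) with false.
rewrite !eqb_id !eqbF_neg !andbT.
case: (ltngtP u v); case: (ltngtP v w); case: (ltngtP u w) => //=; lia.
Qed.

Lemma oi321 u v w : order_iso [:: u; v; w] [:: 3; 2; 1] = (w < v) && (v < u).
Proof.
rewrite /order_iso /= !ltnn /=.
change (1 < 2) with true; change (1 < 3) with true; change (2 < 3) with true.
change (2 < 1) with false; change (3 < 1) with false; change (3 < 2) with false.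
rewrite !eqb_id !eqbF_neg !andbT.
case: (ltngtP u v); case: (ltngtP v w); case: (ltngtP u w) => //=; lia.
Qed.

Lemma oi21 u v : order_iso [:: u; v] [:: 2; 1] = (v < u).
Proof.
rewrite /order_iso /= !ltnn /=.
change (2 < 1) with false; change (1 < 2) with true.
rewrite !eqb_id !eqbF_neg !andbT.
case: (ltngtP u v) => //=; lia.
Qed.

Lemma size3 (t : seq nat) : size t = 3 -> exists u v w, t = [:: u; v; w].
Proof. by case: t => [|u [|v [|w [|]]]] //= _; exists u, v, w. Qed.

Lemma contains123 s : contains s [:: 1; 2; 3] <-> inc3 s.
Proof.
split.
  case/hasP => t; rewrite subseqs_mem => Hs Ho.
  have [u [v [w E]]] : exists u v w, t = [:: u; v; w].
    by apply: size3; move: Ho => /andP [/eqP -> _].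
  subst t; move: Ho; rewrite oi123 => /andP [h1 h2].
  by exists u, v, w.
case=> u [v [w [Hs [h1 h2]]]]; apply/hasP; exists [:: u; v; w].
  by rewrite subseqs_mem.
by rewrite oi123 h1 h2.
Qed.

Lemma contains321 s : contains s [:: 3; 2; 1] <-> dec3 s.
Proof.
split.
  case/hasP => t; rewrite subseqs_mem => Hs Ho.
  have [u [v [w E]]] : exists u v w, t = [:: u; v; w].
    by apply: size3; move: Ho => /andP [/eqP -> _].
  subst t; move: Ho; rewrite oi321 => /andP [h1 h2].
  by exists u, v, w.
case=> u [v [w [Hs [h1 h2]]]]; apply/hasP; exists [:: u; v; w].
  by rewrite subseqs_mem.
by rewrite oi321 h1 h2.
Qed.

Lemma okP s : avoids_all T2 s <-> okst s.
Proof.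
rewrite /avoids_all /avoids /= andbT /okst; split.
  case/andP => /negP h1 /negP h2; split.
    by move/contains123.
  by move/contains321.
case=> h1 h2; apply/andP; split; apply/negP.
  by move/contains123.
by move/contains321.
Qed.

Lemma subseq_consE (x : nat) s d st :
  subseq (x :: s) (d :: st) -> (x = d /\ subseq s st) \/ subseq (x :: s) st.
Proof. by rewrite /=; case: eqP => [->|_]; [left|right]. Qed.

Lemma run_ind T (Pr : seq nat -> seq nat -> seq nat -> Prop) (Q : seq nat -> Prop) :
  (forall st out, Pr [::] st out -> Q (out ++ st)) ->
  (forall a inp st out, Pr (a :: inp) st out ->
      (avoids_all T (a :: st) \/ st = [::]) -> Pr inp (a :: st) out) ->
  (forall a inp b st out, Pr (a :: inp) (b :: st) out ->
      ~~ avoids_all T (a :: b :: st) -> Pr (a :: inp) st (rcons out b)) ->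
  forall f inp st out, (size inp).*2 + size st < f -> Pr inp st out ->
    Q (stack_run T f inp st out).
Proof.
move=> Hfin Hpush Hpop; elim=> [|f IH] inp st out Hf HP //=.
case: inp Hf HP => [|a inp] Hf HP; first exact: Hfin.
case: ifP => Ha.
  apply: IH; last by apply: Hpush => //; left.
  by move: Hf => /=; rewrite doubleS; lia.
case: st Hf HP Ha => [|b st] Hf HP Ha.
  apply: IH; last by apply: Hpush => //; right.
  by move: Hf => /=; rewrite doubleS; lia.
apply: IH; last by apply: Hpop => //; rewrite Ha.
by move: Hf => /=; rewrite doubleS; lia.
Qed.

Lemma west_sub q r p y : q < r -> subseq [:: q; r; p] y ->
  subseq [:: q; p] (west y).
Proof.
move=> qr Hy.
pose Pr (inp st out : seq nat) :=
  subseq [:: q; r; p] inp \/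
  ((q \in st \/ q \in out) /\ subseq [:: r; p] inp) \/
  (q \in out /\ (p \in inp \/ p \in st \/ subseq [:: q; p] out)).
rewrite /west /stack_map.
eapply (@run_ind _ Pr (fun res => subseq [:: q; p] res)); last 2 first.
- by rewrite /= addn0.
- by left.
- move=> st out [|[[_ //]|[Hq [Hp|[Hp|Hp]]]]] //.
  + by rewrite -[[:: q; p]]/([:: q] ++ [:: p]); apply: cat_subseq; rewrite sub1seq.
  + by apply: subseq_trans Hp (prefix_subseq _ _).
- move=> a inp st out [H|[[Hq H]|[Hq Hp]]] Hav; rewrite /Pr.
  + case/subseq_consE: H => [[-> H]|H].
      by right; left; split => //; left; rewrite inE eqxx.
    by left.
  + case/subseq_consE: H => [[Ea H]|H].
      right; right; split; last by left; rewrite -sub1seq.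
      case: Hq => // Hq; exfalso.
      case: Hav => [Hav|Est]; last by rewrite Est in Hq.
      move: Hav; rewrite /avoids_all /= andbT /avoids => /negP; apply.
      apply/hasP; exists [:: a; q]; last by rewrite oi21 -Ea.
      by rewrite subseqs_mem /= eqxx sub1seq.
    right; left; split => //; case: Hq => Hq; [left|right] => //.
    by rewrite inE Hq orbT.
  + right; right; split => //.
    case: Hp => [|[Hp|Hp]].
      rewrite inE => /orP [/eqP ->|Hp]; first by right; left; rewrite inE eqxx.
      by left.
    by right; left; rewrite inE Hp orbT.
    by right; right.
- move=> a inp b st out [H|[[Hq H]|[Hq Hp]]] Hav; rewrite /Pr.
  + by left.
  + right; left; split => //.
    case: Hq => Hq.
      move: Hq; rewrite inE => /orP [/eqP ->|Hq]; last by left.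
      by right; rewrite mem_rcons inE eqxx.
    by right; rewrite mem_rcons inE Hq orbT.
  + right; right; split; first by rewrite mem_rcons inE Hq orbT.
    case: Hp => [|[Hp|Hp]]; first by left.
      move: Hp; rewrite inE => /orP [/eqP ->|Hp]; last by right; left.
      right; right; rewrite -cats1 -[[:: q; b]]/([:: q] ++ [:: b]).
      by apply: cat_subseq; rewrite sub1seq // inE.
    by right; right; apply: subseq_trans Hp (subseq_rcons _ _).
Qed.

Lemma ok1 a : okst [:: a].
Proof.
split; case=> u [v [w [H _]]]; move/size_subseq: H => /=; lia.
Qed.

Lemma ok_sub s s' : subseq s' s -> okst s -> okst s'.
Proof.
move=> Hs [h1 h2]; split.
  by case=> u [v [w [H1 H2]]]; apply: h1; exists u, v, w; split => //; apply: subseq_trans Hs.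
by case=> u [v [w [H1 H2]]]; apply: h2; exists u, v, w; split => //; apply: subseq_trans Hs.
Qed.

Lemma ok_cons a s : okst (a :: s) -> okst s.
Proof. by apply: ok_sub; apply: subseq_cons. Qed.

Lemma forb d st : okst st -> ~~ avoids_all T2 (d :: st) ->
  exists u w, subseq [:: u; w] st /\ ((d < u < w) \/ (w < u < d)).
Proof.
move=> [h1 h2]; rewrite /avoids_all /avoids /= andbT negb_and !negbK.
case/orP => [/contains123|/contains321] [x1 [y [z [H [l1 l2]]]]].
  case/subseq_consE: H => [[E H]|H].
    by exists y, z; split => //; left; subst; rewrite l1 l2.
  by exfalso; apply: h1; exists x1, y, z.
case/subseq_consE: H => [[E H]|H].
  by exists y, z; split => //; right; subst; rewrite l1 l2.
by exfalso; apply: h2; exists x1, y, z.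
Qed.

Lemma sub2_cons (u w e : nat) st : subseq [:: u; w] (e :: st) ->
  (u = e /\ w \in st) \/ subseq [:: u; w] st.
Proof. by case/subseq_consE => [[-> H]|H]; [left; rewrite -sub1seq|right]. Qed.

Definition Jp c (st out : seq nat) := exists q p, q \in out /\ p \in st /\ p < q < c.
Definition Kp c (st : seq nat) := exists u w, subseq [:: u; w] st /\ w < u < c.
Definition Phi c d (st out : seq nat) := exists t, t \in out /\ t < c /\
  (d < t \/ (exists v, v \in st /\ v < t) \/ (exists u w, subseq [:: u; w] st /\ w < u < d)).

Lemma small_pop c d e st out : okst (e :: st) -> uniq (e :: st) -> e < c -> d <= c ->
  ~~ avoids_all T2 (d :: e :: st) -> Phi c d st (rcons out e).
Proof.
move=> ok un ec dc /(forb ok) [u [w [H D]]].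
exists e; split; first by rewrite mem_rcons inE eqxx.
split => //.
case/sub2_cons: H => [[E Hw]|H].
  subst u.
  case: D => /andP [l1 l2]; first by left.
  by right; left; exists w.
case: D => /andP [l1 l2].
  case: (ltngtP e u) => eu.
  - exfalso; case: ok => h1 _; apply: h1; exists e, u, w; split; last by [].
    by rewrite /= eqxx.
  - by left; apply: ltn_trans l1 eu.
  - exfalso; move: un => /= /andP [/negP H' _]; apply: H'; subst.
    by rewrite -sub1seq; apply: subseq_trans H; rewrite /= eqxx.
right; right; exists u, w; split => //; by rewrite l1 l2.
Qed.

Lemma big_pop_J c e st out : c <= e -> Jp c (e :: st) out -> Jp c st (rcons out e).
Proof.
move=> ce [q [p [Hq [Hp /andP [l1 l2]]]]]; exists q, p; split.
  by rewrite mem_rcons inE Hq orbT.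
split; last by rewrite l1 l2.
move: Hp; rewrite inE => /orP [/eqP E|//]; subst; exfalso; lia.
Qed.

Lemma big_pop_K c e st : c <= e -> Kp c (e :: st) -> Kp c st.
Proof.
move=> ce [u [w [H /andP [l1 l2]]]]; exists u, w; split; last by rewrite l1 l2.
by case/sub2_cons: H => [[E _]|//]; subst; exfalso; lia.
Qed.

Lemma big_pop_Phi c d e st out : c <= e -> d <= c -> Phi c d (e :: st) out ->
  Phi c d st (rcons out e).
Proof.
move=> ce dc [t [Ht [tc D]]]; exists t; split; first by rewrite mem_rcons inE Ht orbT.
split => //; case: D => [D|[[v [Hv vt]]|[u [w [H /andP [l1 l2]]]]]]; first by left.
  right; left; exists v; split => //; move: Hv; rewrite inE => /orP [/eqP E|//].
  subst; exfalso; lia.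
right; right; exists u, w; split; last by rewrite l1 l2.
by case/sub2_cons: H => [[E _]|//]; subst; exfalso; lia.
Qed.

Lemma push_JK c d st out : d < c -> okst (d :: st) ->
  Jp c st out \/ Kp c st \/ Phi c d st out -> Jp c (d :: st) out \/ Kp c (d :: st).
Proof.
move=> dc ok [[q [p [Hq [Hp l]]]]|[[u [w [H l]]]|[t [Ht [tc D]]]]].
- by left; exists q, p; rewrite inE Hp orbT.
- by right; exists u, w; split => //; apply: subseq_trans H (subseq_cons _ _).
- case: D => [D|[[v [Hv vt]]|[u [w [H /andP [l1 l2]]]]]].
  + by left; exists t, d; rewrite inE eqxx D.
  + by left; exists t, v; rewrite inE Hv orbT vt.
  + exfalso; case: ok => _; apply; exists d, u, w; split; last by rewrite l1 l2.
    by rewrite /= eqxx.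
Qed.

Lemma push_c c st out : okst (c :: st) ->
  Jp c st out \/ Kp c st \/ Phi c c st out -> Jp c st out.
Proof.
move=> ok [//|[[u [w [H /andP [l1 l2]]]]|[t [Ht [tc D]]]]].
  exfalso; case: ok => _; apply; exists c, u, w; split; last by rewrite l1 l2.
  by rewrite /= eqxx.
case: D => [D|[[v [Hv vt]]|[u [w [H /andP [l1 l2]]]]]].
- exfalso; lia.
- by exists t, v; rewrite Ht Hv vt.
- exfalso; case: ok => _; apply; exists c, u, w; split; last by rewrite l1 l2.
  by rewrite /= eqxx.
Qed.

Lemma ok0 : okst [::].
Proof. by split; case=> u [v [w [H _]]]; move/size_subseq: H. Qed.

Lemma drop_cons (x : seq nat) r a inp : drop r x = a :: inp ->
  [/\ r < size x, nth 0 x r = a & inp = drop r.+1 x].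
Proof.
move=> Hd; have rs : r < size x.
  by case: ltnP => // h; move: Hd; rewrite drop_oversize.
by move: Hd; rewrite (drop_nth 0 rs) => -[-> ->].
Qed.

Lemma s2_main x k ia jb :
  uniq x -> k < size x -> ia < jb -> jb < k ->
  nth 0 x ia < nth 0 x jb -> nth 0 x jb < nth 0 x k ->
  (forall r, ia < r < jb -> nth 0 x k <= nth 0 x r) ->
  (forall r, jb < r < k -> nth 0 x r < nth 0 x k) ->
  (forall i j r, i < j -> j < r -> r < k -> nth 0 x i < nth 0 x j ->
     nth 0 x j < nth 0 x r -> False) ->
  exists q p, p < q < nth 0 x k /\
    subseq [:: q; nth 0 x k; p] (s2 [:: 1; 2; 3] [:: 3; 2; 1] x).
Proof.
move=> Ux ks iajb jbk Hab Hbc Hbig Hsmall Hno.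
set c := nth 0 x k; set av := nth 0 x ia; set b := nth 0 x jb.
pose Qf (res : seq nat) := exists q p, p < q < c /\ subseq [:: q; c; p] res.
pose Fin (st out : seq nat) := Qf (out ++ st).
pose Ph r (st out : seq nat) :=
  [/\ (ia < r < jb -> av \in st),
      (r = jb -> av \in st \/ Phi c b st out),
      (jb < r <= k -> Jp c st out \/ Kp c st \/ Phi c (nth 0 x r) st out) &
      (k < r -> Fin st out)].
pose Pr (inp st out : seq nat) := exists r, r <= size x /\ inp = drop r x /\ okst st /\
  uniq st /\ (forall u, u \in st -> u \in x /\ index u x < r) /\
  (forall u w, subseq [:: u; w] st -> index w x < index u x) /\ Ph r st out.
have := @run_ind T2 Pr Qf; rewrite /s2 /stack_map; apply; last 2 first.
- by rewrite /= addn0.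
- exists 0; split => //; split; first by rewrite drop0.
  split; first exact: ok0.
  do 3!split => //.
  split => h; exfalso; lia.
- move=> st out [r [rs [Hd [_ [_ [_ [_ [_ _ _ H4]]]]]]]].
  move/(congr1 size): Hd; rewrite size_drop /= => Hd.
  by apply: H4; apply: leq_trans ks _; rewrite -subn_eq0 -Hd.
- move=> a inp st out [r [rs [Hd [ok [un [G3 [G4 [P1 P2 P3 P4]]]]]]]] Hav.
  case/drop_cons: (esym Hd) => rs' Ea Hinp; subst a.
  have ok' : okst (nth 0 x r :: st) by case: Hav => [/okP|->] //; exact: ok1.
  have ia_ : index (nth 0 x r) x = r by rewrite index_uniq.
  have aNst : nth 0 x r \notin st by apply/negP => /G3 [_]; rewrite ia_ ltnn.
  exists r.+1; split => //; split => //; split => //.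
  split; first by rewrite /= aNst un.
  split.
    move=> u; rewrite inE => /orP [/eqP ->|/G3 [h1 h2]].
      by rewrite mem_nth // ia_.
    by split => //; rewrite ltnS ltnW.
  split.
    move=> u w /sub2_cons [[-> Hw]|H]; last exact: G4.
    by rewrite ia_; exact: (G3 w Hw).2.
  split.
  + move=> h; have [E|ne] := eqVneq r ia.
      by rewrite inE E eqxx.
    have h' : ia < r < jb by lia.
    by rewrite inE (P1 h') orbT.
  + move=> h; have [E|ne] := eqVneq r ia.
      by left; rewrite inE E eqxx.
    have h' : ia < r < jb by lia.
    by left; rewrite inE (P1 h') orbT.
  + move=> h; have [E|ne] := eqVneq r jb.
      subst r; case: (P2 erefl) => [Hin|Hphi].
        right; left; exists b, av; split; first by rewrite /= eqxx sub1seq.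
        by rewrite Hab Hbc.
      by case: (push_JK Hbc ok' (or_intror (or_intror Hphi))) => H; [left|right; left].
    have h' : jb < r <= k by lia.
    have dc : nth 0 x r < c by apply: Hsmall; lia.
    by case: (push_JK dc ok' (P3 h')) => H; [left|right; left].
  + move=> h; have [E|ne] := eqVneq r k.
      subst r; have h' : jb < k <= k by rewrite jbk leqnn.
      case: (push_c ok' (P3 h')) => q [p [Hq [Hp l]]].
      exists q, p; split => //.
      rewrite -[[:: q; c; p]]/([:: q] ++ [:: c; p]); apply: cat_subseq.
        by rewrite sub1seq.
      by rewrite /= eqxx sub1seq.
    have h' : k < r by lia.
    case: (P4 h') => q [p [l H]]; exists q, p; split => //.
    apply: subseq_trans H _; apply: cat_subseq => //; exact: subseq_cons.
- move=> a inp e st out [r [rs [Hd [ok [un [G3 [G4 [P1 P2 P3 P4]]]]]]]] Hf.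
  case/drop_cons: (esym Hd) => rs' Ea Hinp; subst a.
  exists r; split => //; split => //; split; first exact: ok_cons ok.
  split; first by case/andP: un.
  split; first by move=> u Hu; apply: G3; rewrite inE Hu orbT.
  split; first by move=> u w H; apply: G4; apply: subseq_trans H (subseq_cons _ _).
  have avc : av < c by apply: ltn_trans Hab Hbc.
  split.
  + move=> h; have := P1 h; rewrite inE => /orP [/eqP E|//]; exfalso.
    have cd : c <= nth 0 x r by apply: Hbig.
    have rk : r < k by lia.
    have Hin : forall v, v \in e :: st -> nth 0 x (index v x) = v.
      by move=> v Hv; apply: nth_index; case: (G3 v Hv).
    case: (forb ok Hf) => u [w [H D]].
    case/sub2_cons: (H) => [[Eu Hw]|Hs].
      subst u; case: D => /andP [l1 l2]; first lia.
      have iw : index w x < index e x by apply: G4; rewrite /= eqxx sub1seq.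
      have ie : index e x < r by case: (G3 e (mem_head _ _)).
      apply: (Hno (index w x) (index e x) r) => //.
        by rewrite !Hin ?mem_head // inE Hw orbT.
      by rewrite Hin ?mem_head.
    case: D => /andP [l1 l2].
      case: ok => h1 _; apply: h1; exists e, u, w; split; first by rewrite /= eqxx.
      split => //; lia.
    have iw : index w x < index u x by apply: G4; apply: subseq_trans Hs (subseq_cons _ _).
    have Hu : u \in e :: st by rewrite inE (mem_subseq Hs (mem_head _ _)) orbT.
    have Hw : w \in e :: st.
      by rewrite inE (mem_subseq Hs) ?orbT // !inE eqxx orbT.
    have ie : index u x < r by case: (G3 u Hu).
    apply: (Hno (index w x) (index u x) r) => //; by rewrite !Hin.
  + move=> h; subst r; case: (P2 erefl) => [Hin|Hphi].
      move: Hin; rewrite inE => /orP [/eqP E|Hin]; last by left.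
      right; apply: small_pop => //; first by rewrite -E.
      exact: ltnW.
    right; case: (ltnP e c) => ec.
      apply: small_pop => //; exact: ltnW.
    by apply: big_pop_Phi => //; exact: ltnW.
  + move=> h; have dc : nth 0 x r <= c.
      have [->|ne] := eqVneq r k; first by [].
      by apply: ltnW; apply: Hsmall; lia.
    case: (ltnP e c) => ec.
      by right; right; apply: small_pop.
    case: (P3 h) => [J|[K|F]].
    * by left; apply: big_pop_J.
    * by right; left; apply: big_pop_K K.
    * by right; right; apply: big_pop_Phi.
  + move=> h; have := P4 h; rewrite /Fin cat_rcons //.
Qed.

Lemma index_lt (u v : nat) x : uniq x -> subseq [:: u; v] x -> index u x < index v x.
Proof.
elim: x => [|y x IH] //= /andP [yx ux] H.
have [Eu|ne] := eqVneq u y.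
  subst u; move: H; rewrite /= eqxx sub1seq => vx'.
  have [E|//] := eqVneq y v.
  by move: yx; rewrite E vx'.
move: H; rewrite /= (negPf ne) => H.
idtac.
have vx' : v \in x by apply: (mem_subseq H); rewrite !inE eqxx orbT.
have -> : (y == v) = false by apply/eqP => E; move: yx; rewrite E vx'.
by rewrite ltnS IH.
Qed.

Theorem proposition4p1 (n : nat) (x : seq nat) :
  Sort n [:: 1; 2; 3] [:: 3; 2; 1] x -> avoids x [:: 1; 2; 3].
Proof.
case=> Hp Hw; have Ux : uniq x by rewrite (perm_uniq Hp) iota_uniq.
apply/negP => /contains123 [u [v [w [Hs [uv vw]]]]].
have uvx : subseq [:: u; v] x.
  by apply: subseq_trans Hs; apply: (prefix_subseq [:: u; v] [:: w]).
have vwx : subseq [:: v; w] x.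
  by apply: subseq_trans Hs; apply: subseq_cons.
have ux : u \in x by apply: (mem_subseq uvx); rewrite mem_head.
have vx : v \in x by apply: (mem_subseq vwx); rewrite mem_head.
have wx : w \in x by apply: (mem_subseq vwx); rewrite !inE eqxx orbT.
have i1 := index_lt Ux uvx; have i2 := index_lt Ux vwx.
pose E r := has (fun i => has (fun j => (i < j) && (nth 0 x i < nth 0 x j < nth 0 x r))
  (iota 0 r)) (iota 0 r).
have EP r : reflect (exists i j, [/\ i < j, j < r & nth 0 x i < nth 0 x j < nth 0 x r]) (E r).
  apply: (iffP hasP) => [[i Hi /hasP [j Hj /andP [ij H]]]|[i [j [ij jr H]]]].
    by exists i, j; split => //; move: Hj; rewrite mem_iota.
  exists i; first by rewrite mem_iota /=; apply: ltn_trans jr.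
  by apply/hasP; exists j; rewrite ?mem_iota ?ij.
have Ew : E (index w x).
  apply/EP; exists (index u x), (index v x); split => //.
  by rewrite !nth_index // uv vw.
have exE : exists r, E r by exists (index w x).
have [k Ek kmin] := ex_minnP exE.
have ks : k < size x by apply: leq_ltn_trans (kmin _ Ew) _; rewrite index_mem.
set c := nth 0 x k.
have Hno : forall i j r, i < j -> j < r -> r < k -> nth 0 x i < nth 0 x j ->
     nth 0 x j < nth 0 x r -> False.
  move=> i j r ij jr rk l1 l2; have : E r by apply/EP; exists i, j; rewrite l1 l2.
  by move/kmin; rewrite leqNgt rk.
pose F j := (j < k) && has (fun i => nth 0 x i < nth 0 x j < c) (iota 0 j).
have exF : exists j, F j.
  case/EP: Ek => i [j [ij jk H]]; exists j; rewrite /F jk /=.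
  by apply/hasP; exists i; rewrite ?mem_iota.
have [jb Fjb jbmin] := ex_minnP exF.
move: (Fjb) => /andP [jbk /hasP [i1' Hi1' /andP [l1 bc]]].
move: Hi1'; rewrite mem_iota /= => i1jb.
pose P i := (i < jb) && (nth 0 x i < c).
have exP : exists i, P i by exists i1'; rewrite /P i1jb (ltn_trans l1 bc).
have bndP : forall i, P i -> i <= jb by move=> i /andP [h _]; apply: ltnW.
have [ia Pia iamax] := ex_maxnP exP bndP.
move: (Pia) => /andP [iajb iac].
have i1ia : i1' <= ia by apply: iamax; rewrite /P i1jb (ltn_trans l1 bc).
have Hab : nth 0 x ia < nth 0 x jb.
  case: (ltngtP (nth 0 x ia) (nth 0 x jb)) => // h.
    have : F ia.
      rewrite /F (ltn_trans iajb jbk) /=; apply/hasP; exists i1'.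
        rewrite mem_iota /= ltn_neqAle i1ia andbT; apply/eqP => E1.
        by move: h; rewrite add0n in E1; rewrite -E1 ltnNge (ltnW l1).
      by rewrite iac (ltn_trans l1 h).
    by move/jbmin; rewrite leqNgt iajb.
  move/eqP: h; rewrite nth_uniq // ?(ltn_trans iajb (ltn_trans jbk ks)) ?(ltn_trans jbk ks) //.
  by move/eqP => h; move: iajb; rewrite h ltnn.
have Hbig : forall r, ia < r < jb -> c <= nth 0 x r.
  move=> r /andP [h1 h2]; rewrite leqNgt; apply/negP => h.
  by have := iamax r; rewrite /P h2 h => /(_ isT); rewrite leqNgt h1.
have Hsmall : forall r, jb < r < k -> nth 0 x r < c.
  move=> r /andP [h1 h2]; rewrite ltnNge; apply/negP => h.
  by apply: (Hno ia jb r) => //; apply: leq_trans bc h.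
have [q [p [/andP [pq qc] Hsub]]] := s2_main Ux ks iajb jbk Hab bc Hbig Hsmall Hno.
have := west_sub qc Hsub; rewrite Hw => /subseq_sorted.
by move/(_ _ ltn_trans (iota_ltn_sorted 1 n)) => /=; rewrite andbT ltnNge ltnW.
Qed.
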